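(* Let $\zeta>1$. If a distribution $\mu$ over $\{-1,+1\}^n$ is completely $\zeta$-marginally stable, then for every integer $k\ge1$, the $k$-transformed distribution $\mu_k=\mathrm{Rd}(\mu,k)$ is $2\zeta$-marginally stable.
   Context: For a distribution $\nu$ on $\{-1,+1\}^N$: $\Omega(\nu)$ support, $\nu_\Lambda$ marginal, $\nu^\sigma$ conditional given $\sigma\in\Omega(\nu_\Lambda)$. $\nu$ is $\zeta$-marginally stable if for every $i\in N$, every $S\subseteq\Lambda\subseteq N\setminus\{i\}$, and every $\sigma\in\Omega(\nu_\Lambda)$, $R_i^\sigma\le\zeta$ and $R_i^\sigma\le\zeta R_i^{\sigma_S}$, where $R_i^\sigma=\nu_i^\sigma(+1)/\nu_i^\sigma(-1)$. $\mu$ is completely $\zeta$-marginally stable if $(\boldsymbol\lambda*\mu)$ is $\zeta$-marginally stable for all $\boldsymbol\lambda\in(0,1]^n$, where $(\boldsymbol\lambda*\mu)(\sigma)\propto\mu(\sigma)\prod_{i:\sigma_i=+1}\lambda_i$. $k$-transformation: $\mathrm{Rd}(\mu,k)$ is the law of $Y\in\{-1,+1\}^{[n]\times[k]}$ obtained from $X\sim\mu$: if $X_i=-1$, $Y_{(i,j)}=-1$ for all $j$; if $X_i=+1$, $Y_{(i,j^* )}=+1$ and $Y_{(i,j)}=-1$ for $j\ne j^*$, with $j^*$ uniform in $[k]$ independently. *)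

(* Defs.v *)
From HB Require Import structures.
From mathcomp Require Import all_boot all_order all_algebra.
From mathcomp Require Import constructive_ereal.
Set Implicit Arguments. Unset Strict Implicit. Unset Printing Implicit Defensive.
Import Order.TTheory GRing.Theory Num.Theory.
Local Open Scope ring_scope.

(* Spins: true = +1, false = -1.  A configuration on the finite index set I
   is a finite function I -> bool; a distribution is a weight function on
   configurations. *)
Section Defs.
Variables (R : realFieldType) (I : finType).
Notation cfg := {ffun I -> bool}.

Definition is_distribution (nu : cfg -> R) :=
  (forall x, 0 <= nu x) /\ \sum_(x : cfg) nu x = 1.

(* marginal nu_Lambda evaluated at (the restriction to Lambda of) sigma *)
Definition marg (nu : cfg -> R) (L : {set I}) (sigma : cfg) : R :=
  \sum_(tau : cfg | [forall j in L, tau j == sigma j]) nu tau.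

Definition in_supp (nu : cfg -> R) (L : {set I}) (sigma : cfg) :=
  0 < marg nu L sigma.

Definition upd (sigma : cfg) (i : I) (b : bool) : cfg :=
  [ffun j => if j == i then b else sigma j].

Definition cond (nu : cfg -> R) (L : {set I}) (sigma : cfg) (i : I) (b : bool) : R :=
  marg nu (i |: L) (upd sigma i b) / marg nu L sigma.

Definition ratio (nu : cfg -> R) (L : {set I}) (sigma : cfg) (i : I) : \bar R :=
  if cond nu L sigma i false == 0 then +oo%E
  else ((cond nu L sigma i true / cond nu L sigma i false)%:E)%E.

(* zeta-marginal stability; sigma_S is the restriction of sigma to S *)
Definition marginally_stable (zeta : R) (nu : cfg -> R) :=
  forall (i : I) (S L : {set I}) (sigma : cfg),
    S \subset L -> i \notin L -> in_supp nu L sigma ->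
    (ratio nu L sigma i <= zeta%:E)%E /\
    (ratio nu L sigma i <= zeta%:E * ratio nu S sigma i)%E.

Definition tilt (lambda : I -> R) (mu : cfg -> R) (sigma : cfg) : R :=
  mu sigma * (\prod_(i | sigma i) lambda i) /
  \sum_(tau : cfg) mu tau * (\prod_(i | tau i) lambda i).

Definition completely_marginally_stable (zeta : R) (mu : cfg -> R) :=
  forall lambda : I -> R, (forall i, 0 < lambda i <= 1) ->
    marginally_stable zeta (tilt lambda mu).
End Defs.

(* k-transformation Rd(mu,k): law of Y on [n] x [k] obtained from X ~ mu. *)
Definition kernel_block (R : realFieldType) (n k : nat) (x : {ffun 'I_n -> bool})
  (y : {ffun ('I_n * 'I_k) -> bool}) (i : 'I_n) : R :=
  if x i then (if #|[set j : 'I_k | y (i, j)]| == 1%N then k%:R^-1 else 0)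
  else (if [forall j : 'I_k, ~~ y (i, j)] then 1 else 0).

Definition Rd (R : realFieldType) (n : nat) (mu : {ffun 'I_n -> bool} -> R) (k : nat)
  (y : {ffun ('I_n * 'I_k) -> bool}) : R :=
  \sum_(x : {ffun 'I_n -> bool}) mu x * \prod_(i : 'I_n) @kernel_block R n k x y i.
Arguments Rd {R n} mu k y.

(* Main.v *)
Require Import Defs.
From mathcomp Require Import all_boot all_order all_algebra.
From mathcomp Require Import constructive_ereal.
From mathcomp Require Import ring lra.
Import Order.TTheory GRing.Theory Num.Theory.
Local Open Scope ring_scope.
Set Implicit Arguments. Unset Strict Implicit. Unset Printing Implicit Defensive.

Section Gen.
Variables (R : realFieldType) (I : finType).
Notation cfg := {ffun I -> bool}.

Lemma sum_sub (T : finType) (P Q : pred T) (F : T -> R) :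
  (forall x, P x -> Q x) -> (forall x, Q x -> 0 <= F x) ->
  \sum_(x | P x) F x <= \sum_(x | Q x) F x.
Proof.
move=> PQ F0; rewrite big_mkcond [X in _ <= X]big_mkcond /=; apply: ler_sum => x _.
case: (boolP (P x)) => Px; first by rewrite (PQ x Px).
by case: (boolP (Q x)) => Qx //; apply: F0.
Qed.

Lemma marg_ge0 (nu : cfg -> R) (L : {set I}) s : (forall x, 0 <= nu x) -> 0 <= marg nu L s.
Proof. by move=> nu0; apply: sumr_ge0. Qed.

Lemma marg_mono (nu : cfg -> R) (S L : {set I}) s : (forall x, 0 <= nu x) -> S \subset L ->
  marg nu L s <= marg nu S s.
Proof.
move=> nu0 SL; apply: sum_sub => // x /forall_inP H; apply/forall_inP => j jS.
exact: H _ (subsetP SL j jS).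
Qed.

Lemma marg_split (nu : cfg -> R) (L : {set I}) s i : i \notin L ->
  marg nu L s = marg nu (i |: L) (upd s i true) + marg nu (i |: L) (upd s i false).
Proof.
move=> iL; rewrite /marg (bigID (fun t : cfg => t i)) /=; congr (_ + _); apply: eq_bigl => t.
- apply/idP/idP.
  + case/andP=> /forall_inP H ti; apply/forall_inP => j; rewrite in_setU1 ffunE.
    case: eqP => [->|_] /=; first by rewrite ti.
    exact: H.
  + move/forall_inP=> H; apply/andP; split.
    * apply/forall_inP => j jL; have jni : j != i by apply: contraNneq iL => <-.
      by have := H j; rewrite in_setU1 jL orbT ffunE (negbTE jni) => /(_ isT).
    * by have := H i; rewrite setU11 ffunE eqxx => /(_ isT)/eqP.
- apply/idP/idP.
  + case/andP=> /forall_inP H ti; apply/forall_inP => j; rewrite in_setU1 ffunE.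
    case: eqP => [->|_] /=; first by rewrite (negbTE ti).
    exact: H.
  + move/forall_inP=> H; apply/andP; split.
    * apply/forall_inP => j jL; have jni : j != i by apply: contraNneq iL => <-.
      by have := H j; rewrite in_setU1 jL orbT ffunE (negbTE jni) => /(_ isT).
    * by have := H i; rewrite setU11 ffunE eqxx => /(_ isT)/eqP ->.
Qed.

Lemma ratioE (nu : cfg -> R) (L : {set I}) s i : marg nu L s != 0 ->
  Defs.ratio nu L s i = if marg nu (i |: L) (upd s i false) == 0 then +oo%E
    else ((marg nu (i |: L) (upd s i true) / marg nu (i |: L) (upd s i false))%:E)%E.
Proof.
move=> Z0; rewrite /Defs.ratio /cond mulf_eq0 invr_eq0 (negbTE Z0) orbF.
case: eqP => // /eqP Mf; congr (_%:E)%E; field.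
by rewrite Z0 Mf.
Qed.

Lemma cross (a b c d z : R) : 0 < b -> 0 < d -> a / b <= z * (c / d) -> a * d <= z * c * b.
Proof.
move=> b0 d0 H.
have ea : a = (a/b)*b by rewrite divfK ?gt_eqF.
have ec : c = (c/d)*d by rewrite divfK ?gt_eqF.
rewrite ea [in X in _ <= X]ec.
move: H; set x := a / b; set y := c / d => H.
have h1 : 0 <= (z * y - x) * b by apply: mulr_ge0; lra.
have h2 : 0 <= (z * y - x) * b * d by apply: mulr_ge0; lra.
nra.
Qed.

End Gen.

Section XW.
Variables (R : realFieldType) (I : finType) (zeta : R) (mu : {ffun I -> bool} -> R).
Notation cfg := {ffun I -> bool}.
Hypothesis mu0 : forall x, 0 <= mu x.
Hypothesis zeta0 : 0 < zeta.
Hypothesis cms : completely_marginally_stable zeta mu.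
Variable i : I.

Definition EE (e : I -> bool -> R) (x : cfg) := \prod_(j | j != i) e j (x j).
Definition BB (e : I -> bool -> R) b := \sum_(x : cfg | x i == b) mu x * EE e x.

Lemma EE_ge0 e : (forall j b, 0 <= e j b) -> forall x, 0 <= EE e x.
Proof. by move=> e0 x; apply: prodr_ge0 => j _. Qed.

Lemma BB_ge0 e : (forall j b, 0 <= e j b) -> forall b, 0 <= BB e b.
Proof. by move=> e0 b; apply: sumr_ge0 => x _; apply: mulr_ge0 => //; apply: EE_ge0. Qed.

Lemma EE_upd e x b : EE e (upd x i b) = EE e x.
Proof. by apply: eq_bigr => j ji; rewrite ffunE (negbTE ji). Qed.

Section LemX.
Variable e : I -> bool -> R.
Hypothesis e0 : forall j b, 0 <= e j b.
Hypothesis eadm : forall j, (e j true <= e j false) || (e j false == 0).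

Lemma lemX (w : cfg) : w i = true -> 0 < EE e w ->
  mu w <= zeta * mu (upd w i false) /\
  mu w * BB e false <= zeta * mu (upd w i false) * BB e true.
Proof.
move=> wi Ew.
have Bt0 := BB_ge0 e0 true.
have mw'0 := mu0 (upd w i false).
have [mw0|mwpos] := eqVneq (mu w) 0.
  rewrite mw0 mul0r; split; first by apply: mulr_ge0 => //; apply: ltW.
  by apply: mulr_ge0 => //; apply: mulr_ge0 => //; apply: ltW.
have mwp : 0 < mu w by rewrite lt_def mwpos mu0.
pose pos j := (0 < e j true) && (0 < e j false).
pose lam j := if (j != i) && pos j then e j true / e j false else 1.
have lam_ok : forall j, 0 < lam j <= 1.
  move=> j; rewrite /lam; case: ifP => [/andP[_ /andP[et ef]]|_]; last by rewrite ltr01 lexx.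
  rewrite divr_gt0 // ler_pdivrMr // mul1r.
  by have := eadm j; case/orP => // /eqP ef0; rewrite ef0 ltxx in ef.
have lami : lam i = 1 by rewrite /lam eqxx.
pose P := [set j | (j != i) && ~~ pos j].
pose L := [set j | j != i].
pose Lam (x : cfg) := \prod_(j | x j) lam j.
pose W (A : {set I}) (s : cfg) := \sum_(t : cfg | [forall j in A, t j == s j]) mu t * Lam t.
pose N := \sum_(t : cfg) mu t * Lam t.
have Lam_gt0 x : 0 < Lam x by apply: prodr_gt0 => j _; case/andP: (lam_ok j).
have W_ge0 A s : 0 <= W A s by apply: sumr_ge0 => t _; apply: mulr_ge0 => //; apply: ltW.
have margE A s : marg (tilt lam mu) A s = W A s / N.
  by rewrite /marg /tilt /W -mulr_suml.
have N_gt0 : 0 < N.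
  rewrite /N (bigD1 w) //= ltr_wpDr //; last by apply: mulr_gt0.
  by apply: sumr_ge0 => t _; apply: mulr_ge0 => //; apply: ltW.
have ratioW A s : W A s != 0 -> Defs.ratio (tilt lam mu) A s i =
   if W (i |: A) (upd s i false) == 0 then +oo%E
   else ((W (i |: A) (upd s i true) / W (i |: A) (upd s i false))%:E)%E.
  move=> WA; rewrite ratioE ?margE; last by rewrite mulf_eq0 invr_eq0 (gt_eqF N_gt0) orbF.
  rewrite mulf_eq0 invr_eq0 (gt_eqF N_gt0) orbF; case: ifP => // /negbT Wf.
  congr (_%:E)%E; field; by rewrite Wf gt_eqF.
have WT s : W setT s = mu s * Lam s.
  rewrite /W (big_pred1 s) // => t; apply/forall_inP/eqP => [H|->//]; apply/ffunP => j.
  by apply/eqP/H; rewrite inE.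
have iL : i \notin L by rewrite inE eqxx.
have PL : P \subset L by apply/subsetP => j; rewrite !inE => /andP[].
have iLT : i |: L = setT by apply/setP => j; rewrite !inE; case: eqP.
have wagree (A : {set I}) : [forall j in A, w j == w j] by apply/forall_inP.
have WL0 : 0 < W L w.
  rewrite /W (bigD1 w) //= ltr_wpDr //; last by apply: mulr_gt0.
  by apply: sumr_ge0 => t _; apply: mulr_ge0 => //; apply: ltW.
have supp : in_supp (tilt lam mu) L w by rewrite /in_supp margE divr_gt0.
have [st1 st2] := cms lam_ok PL iL supp.
have WP0 : 0 < W P w.
  apply: lt_le_trans WL0 _; apply: sum_sub => [t /forall_inP H|t _].
    by apply/forall_inP => j jP; apply: H; apply: (subsetP PL).
  by apply: mulr_ge0 => //; apply: ltW.
rewrite (ratioW _ _ (negbT (gt_eqF WL0))) in st1 st2.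
rewrite (ratioW _ _ (negbT (gt_eqF WP0))) in st2.
rewrite iLT !WT in st1.
rewrite iLT !WT in st2.
idtac.
have wup : upd w i true = w by apply/ffunP => j; rewrite ffunE; case: eqP => [->|].
rewrite wup in st1 st2.
set w' := upd w i false in st1 st2 mw'0 *.
have LamE : Lam w' = Lam w.
  rewrite /Lam [in RHS](bigD1 i) //= lami mul1r; apply: eq_bigl => j.
  by rewrite /w' ffunE; case: eqP => [->|]; rewrite ?eqxx ?andbF // andbT.
rewrite LamE in st1 st2.
move: st1; case: ifP => [_ //|/negbT m'0]; rewrite lee_fin => st1.
have m'p : 0 < mu w' * Lam w by rewrite lt_def m'0 mulr_ge0 // ltW.
have c1 : mu w <= zeta * mu w'.
  move: st1; rewrite ler_pdivrMr // mulrA.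
  by rewrite ler_pM2r.
split => //.
have ewpos j : j != i -> 0 < e j (w j).
  move=> ji; rewrite lt_def e0 andbT; apply/eqP => ej0.
  by move: Ew; rewrite /EE (bigD1 j) //= ej0 mul0r ltxx.
pose c j := if j \in P then e j (w j) else e j false.
pose C := \prod_(j | j != i) c j.
have c_gt0 j : j != i -> 0 < c j.
  move=> ji; rewrite /c inE ji /=; case: ifP => [_|]; first exact: ewpos.
  by move/negbFE => /andP[].
have C_gt0 : 0 < C by apply: prodr_gt0.
have ecoord j b : j != i ->
   e j b = c j * (if j \in P then ((b == w j)%:R) else 1) * (if b then lam j else 1).
  move=> ji; have ewj := ewpos j ji.
  rewrite /c /lam !inE ji /=; case: (boolP (pos j)) => /= [/andP[et ef] | npos].
    by case: b; rewrite ?mulr1 // mulrC divfK ?gt_eqF.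
  have -> : (if b then 1 else 1) = 1 :> R by case: b.
  rewrite mulr1; move: npos; rewrite /pos negb_and -!leNgt.
  case wj: (w j) ewj => ewj /orP[h|h].
  - by rewrite ltNge h in ewj.
  - have ef : e j false = 0 by apply/eqP; rewrite eq_le h e0.
    by case: b; rewrite ?mulr1 ?mulr0.
  - have et : e j true = 0 by apply/eqP; rewrite eq_le h e0.
    by case: b; rewrite ?mulr1 ?mulr0.
  - by rewrite ltNge h in ewj.
pose agreeP (x : cfg) := [forall j in P, x j == w j].
have EEdec x : EE e x = C * (agreeP x)%:R * Lam x.
  rewrite /EE (eq_bigr (fun j => c j * (if j \in P then ((x j == w j)%:R) else 1) *
      (if x j then lam j else 1))); last by move=> j ji; apply: ecoord.
  rewrite !big_split /=; congr (_ * _ * _).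
  - case: (boolP (agreeP x)) => H.
      rewrite big1 // => j _; case: ifP => // jP.
      by have := forall_inP H j jP => ->.
    case/forall_inPn: H => j jP xj.
    have ji : j != i by move: jP; rewrite inE => /andP[].
    by rewrite (bigD1 j) //= jP (negbTE xj) mul0r.
  - rewrite /Lam [in RHS]big_mkcond /= [in RHS](bigD1 i) //= lami.
    by case: (x i); rewrite mul1r.
have BBdec b : BB e b = C * W (i |: P) (upd w i b).
  rewrite /BB /W mulr_sumr.
  have -> : \sum_(x : cfg | [forall j in i |: P, x j == upd w i b j]) C * (mu x * Lam x)
         = \sum_(x : cfg | (x i == b) && agreeP x) C * (mu x * Lam x).
    apply: eq_bigl => x; apply/forall_inP/andP => [H|[/eqP xi /forall_inP H] j].
      split; first by have := H i (setU11 _ _); rewrite ffunE eqxx.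
      apply/forall_inP => j jP; have ji : j != i by move: jP; rewrite inE => /andP[].
      by have := H j; rewrite in_setU1 jP orbT ffunE (negbTE ji) => /(_ isT).
    rewrite in_setU1 ffunE; case: eqP => [->|ji] /=; first by rewrite xi.
    exact: H.
  rewrite big_mkcondr; apply: eq_bigr => x _; rewrite EEdec.
  by case: (agreeP x); rewrite ?mulr1 ?mulr0 ?mul0r //; ring.
rewrite !BBdec wup -/w'.
move: st2; rewrite (negbTE m'0); case: ifP => [/eqP Wf0 _|/negbT Wf0].
  rewrite Wf0 !mulr0; apply: mulr_ge0; first by apply: mulr_ge0 => //; apply: ltW.
  by apply: mulr_ge0 => //; apply: ltW.
rewrite -EFinM lee_fin => st2.
have Wfp : 0 < W (i |: P) w' by rewrite lt_def Wf0 W_ge0.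
have := cross m'p Wfp st2.
set Wt := W (i |: P) w; set Wf := W (i |: P) w'.
move=> h.
have h2 : mu w * Wf * Lam w <= zeta * mu w' * Wt * Lam w.
  have e1 : mu w * Wf * Lam w = mu w * Lam w * Wf by ring.
  have e2 : zeta * mu w' * Wt * Lam w = zeta * Wt * (mu w' * Lam w) by ring.
  by rewrite e1 e2.
rewrite ler_pM2r // in h2.
have := ler_wpM2l (ltW C_gt0) h2.
have e1 : C * (mu w * Wf) = mu w * (C * Wf) by ring.
have e2 : C * (zeta * mu w' * Wt) = zeta * mu w' * (C * Wt) by ring.
by rewrite e1 e2.
Qed.

End LemX.
End XW.

Section XW2.
Variables (R : realFieldType) (I : finType) (zeta : R) (mu : {ffun I -> bool} -> R).
Notation cfg := {ffun I -> bool}.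
Hypothesis mu0 : forall x, 0 <= mu x.
Hypothesis zeta0 : 0 < zeta.
Hypothesis cms : completely_marginally_stable zeta mu.
Variable i : I.

Lemma BB_flip (e : I -> bool -> R) :
  BB mu i e false = \sum_(x : cfg | x i) mu (upd x i false) * EE i e x.
Proof.
pose fl (x : cfg) := upd x i (~~ x i).
have flK : involutive fl.
  move=> x; apply/ffunP => j; rewrite /fl !ffunE; case: eqP => [->|] //.
  by rewrite eqxx negbK.
rewrite /BB (reindex_inj (inv_inj flK)); apply: eq_big => x.
  by rewrite /fl ffunE eqxx; case: (x i).
move=> xi; rewrite EE_upd; congr (mu _ * _).
by rewrite /fl; move: xi; rewrite ffunE eqxx; case: (x i).
Qed.

Lemma sumA (e : I -> bool -> R) : (forall j b, 0 <= e j b) ->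
  (forall j, (e j true <= e j false) || (e j false == 0)) ->
  BB mu i e true <= zeta * BB mu i e false.
Proof.
move=> e0 eadm; rewrite BB_flip mulr_sumr /BB.
rewrite (eq_bigl (fun x : cfg => x i)); last by move=> x; rewrite eqb_id.
apply: ler_sum => x xi.
have E0 := EE_ge0 i e0 x.
have [Ex0|Exn] := eqVneq (EE i e x) 0.
  by rewrite Ex0 !mulr0.
have Exp : 0 < EE i e x by rewrite lt_def Exn E0.
have [h _] := lemX mu0 zeta0 cms e0 eadm xi Exp.
rewrite mulrA; exact: ler_wpM2r.
Qed.

Lemma sumB (e f : I -> bool -> R) : (forall j b, 0 <= e j b) ->
  (forall j, (e j true <= e j false) || (e j false == 0)) ->
  (forall j b, 0 <= f j b) ->
  (forall x, 0 < EE i f x -> 0 < EE i e x) ->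
  BB mu i f true * BB mu i e false <= zeta * BB mu i e true * BB mu i f false.
Proof.
move=> e0 eadm f0 fe; rewrite (BB_flip f) /BB mulr_suml [in X in _ <= X]mulr_sumr.
rewrite (eq_bigl (fun x : cfg => x i)); last by move=> x; rewrite eqb_id.
apply: ler_sum => x xi.
have F0 := EE_ge0 i f0 x.
have [Fx0|Fxn] := eqVneq (EE i f x) 0.
  by rewrite Fx0 !mulr0 mul0r.
have Fxp : 0 < EE i f x by rewrite lt_def Fxn F0.
have [_ h] := lemX mu0 zeta0 cms e0 eadm xi (fe x Fxp).
have := ler_wpM2r F0 h.
set Bf := \sum_(x0 : cfg | x0 i == false) mu x0 * EE i e x0.
set Bt := \sum_(x0 : cfg | x0 i == true) mu x0 * EE i e x0.
have e1 : mu x * Bf * EE i f x = mu x * EE i f x * Bf by ring.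
have e2 : zeta * mu (upd x i false) * Bt * EE i f x = zeta * Bt * (mu (upd x i false) * EE i f x) by ring.
by rewrite e1 e2.
Qed.

End XW2.

Section YW.
Variables (R : realFieldType) (n k : nat).
Hypothesis k1 : (1 <= k)%N.
Notation Y := ('I_n * 'I_k)%type.
Notation ycfg := {ffun Y -> bool}.
Notation zcfg := {ffun 'I_k -> bool}.
Notation xcfg := {ffun 'I_n -> bool}.

Definition blk (y : ycfg) (i : 'I_n) : zcfg := [ffun j => y (i, j)].
Definition kbb (b : bool) (z : zcfg) : R :=
  if b then (if #|[set j | z j]| == 1%N then k%:R^-1 else 0)
  else (if [forall j, ~~ z j] then 1 else 0).
Definition pinz (L : {set Y}) (s : ycfg) (i : 'I_n) (z : zcfg) :=
  [forall j, ((i, j) \in L) ==> (z j == s (i, j))].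
Definition HH (L : {set Y}) (s : ycfg) (i : 'I_n) (b : bool) : R :=
  \sum_(z | pinz L s i z) kbb b z.

Lemma kbE (x : xcfg) (y : ycfg) i : @kernel_block R n k x y i = kbb (x i) (blk y i).
Proof.
rewrite /kernel_block /kbb; case: (x i).
  have -> : [set j | blk y i j] = [set j | y (i, j)] by apply/setP => j; rewrite !inE ffunE.
  by [].
have -> : [forall j, ~~ blk y i j] = [forall j, ~~ y (i, j)].
  by apply: eq_forallb => j; rewrite ffunE.
by [].
Qed.

Lemma factor (F : 'I_n -> zcfg -> R) (L : {set Y}) (s : ycfg) :
  \sum_(y : ycfg | [forall p in L, y p == s p]) \prod_i F i (blk y i) =
  \prod_i \sum_(z | pinz L s i z) F i z.
Proof.
rewrite [RHS](eq_bigr (fun i => \sum_z (if pinz L s i z then F i z else 0))); last first.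
  by move=> i _; rewrite big_mkcond.
rewrite bigA_distr_bigA /=.
pose unc (f : {ffun 'I_n -> zcfg}) : ycfg := [ffun p => f p.1 p.2].
pose cur (y : ycfg) : {ffun 'I_n -> zcfg} := [ffun i => blk y i].
have uncK : cancel unc cur.
  by move=> f; apply/ffunP => i; apply/ffunP => j; rewrite !ffunE.
have curK : cancel cur unc.
  by move=> y; apply/ffunP => -[i j]; rewrite !ffunE.
rewrite (reindex unc) /=; last by apply: onW_bij; exists cur.
rewrite big_mkcond; apply: eq_bigr => f _.
have blkE i : blk (unc f) i = f i by apply/ffunP => j; rewrite !ffunE.
case: (boolP [forall p in L, unc f p == s p]) => H.
  apply: eq_bigr => i _; rewrite blkE.
  have -> // : pinz L s i (f i).
  apply/forallP => j; apply/implyP => ijL; have := forall_inP H (i, j) ijL.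
  by rewrite ffunE.
case/forall_inPn: H => p pL fp.
rewrite (bigD1 p.1) //=.
have -> : pinz L s p.1 (f p.1) = false.
  apply/negbTE; apply/forallPn; exists p.2; rewrite negb_imply.
  by case: p pL fp => a b /= -> /=; rewrite ffunE.
by rewrite mul0r.
Qed.

Lemma margY (mu : xcfg -> R) (L : {set Y}) (s : ycfg) :
  marg (Rd mu k) L s = \sum_(x : xcfg) mu x * \prod_i HH L s i (x i).
Proof.
rewrite /marg /Rd exchange_big /=; apply: eq_bigr => x _.
rewrite -mulr_sumr; congr (_ * _).
rewrite /HH -factor; apply: eq_bigr => y _; apply: eq_bigr => i _.
by rewrite kbE.
Qed.

Definition zf : zcfg := [ffun => false].

Lemma sum_kbbF (P : pred zcfg) : \sum_(z | P z) kbb false z = if P zf then 1 else 0.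
Proof.
have -> : \sum_(z | P z) kbb false z = \sum_(z | P z) (if z == zf then 1 else 0).
  apply: eq_bigr => z _; rewrite /kbb; congr (if _ then _ else _).
  apply/forallP/eqP => [H|->]; last by move=> j; rewrite ffunE.
  by apply/ffunP => j; rewrite ffunE; exact: negbTE (H j).
rewrite -big_mkcondr /=; case: ifP => Pz.
  by rewrite (big_pred1 zf) // => z /=; case: eqP => [->|]; rewrite ?Pz ?andbF ?andbT.
by rewrite big_pred0 // => z /=; case: eqP => [->|]; rewrite ?Pz ?andbF.
Qed.

Lemma one_true (z : zcfg) : #|[set j | z j]| == 1%N -> exists j0, z = [ffun j => j == j0].
Proof.
case/cards1P => j0 H; exists j0; apply/ffunP => j; rewrite ffunE.
by have := congr1 (fun A : {set 'I_k} => j \in A) H; rewrite /= !inE.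
Qed.

Lemma kbb_ge0 b z : 0 <= kbb b z.
Proof. by rewrite /kbb; case: b; case: ifP; rewrite ?invr_ge0 ?ler0n ?ler01. Qed.

Lemma sum_kbbT_le1 (P : pred zcfg) : \sum_(z | P z) kbb true z <= 1.
Proof.
apply: le_trans (sum_sub (Q := predT) _ _) _ => // [z _|]; first exact: kbb_ge0.
rewrite /kbb -big_mkcond /= sumr_const.
have kp : (0 < k%:R :> R) by rewrite ltr0n.
have cb : (#|[pred z : zcfg | #|[set j | z j]| == 1%N]| <= k)%N.
  rewrite -[k in (_ <= k)%N]card_ord.
  apply: leq_trans (leq_imset_card (fun j : 'I_k => [ffun j' => j' == j] : zcfg) 'I_k).
  apply: subset_leq_card; apply/subsetP => z; rewrite inE => /one_true [j0 ->].
  by apply/imsetP; exists j0.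
rewrite -[X in X <= 1]mulr_natr.
apply: (@le_trans _ _ (k%:R^-1 * k%:R)); last by rewrite mulVf // gt_eqF.
apply: ler_wpM2l; first by rewrite invr_ge0; exact: ltW.
by rewrite ler_nat.
Qed.

Lemma HH_ge0 L s i b : 0 <= HH L s i b.
Proof. by apply: sumr_ge0 => z _; apply: kbb_ge0. Qed.

Lemma HH_adm L s i : (HH L s i true <= HH L s i false) || (HH L s i false == 0).
Proof.
rewrite /HH sum_kbbF; case: ifP => _; first by rewrite sum_kbbT_le1.
by rewrite eqxx orbT.
Qed.

Lemma HH_mono (S L : {set Y}) s i b : S \subset L -> HH L s i b <= HH S s i b.
Proof.
move=> SL; apply: sum_sub => [z /forallP H|z _]; last exact: kbb_ge0.
apply/forallP => j; apply/implyP => jS; have := H j.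
by rewrite (subsetP SL _ jS).
Qed.

Variables (i0 : 'I_n) (j0 : 'I_k).
Notation s0 := (i0, j0).

Lemma pinz_site (L : {set Y}) s b z : s0 \notin L ->
  pinz (s0 |: L) (upd s s0 b) i0 z = (z j0 == b) && pinz L s i0 z.
Proof.
move=> sL; apply/forallP/andP => [H|[zb /forallP H] j].
  split; first by have := H j0; rewrite setU11 ffunE eqxx.
  apply/forallP => j; apply/implyP => jL; have := H j; rewrite in_setU1 jL orbT ffunE /=.
  have ne : (i0, j) != s0 by apply: contraNneq sL => <-.
  by rewrite (negbTE ne).
rewrite in_setU1 ffunE; case: eqP => [[->]|ne] /=; first by rewrite zb.
exact: H j.
Qed.

Lemma pinz_other (L : {set Y}) s b i z : i != i0 ->
  pinz (s0 |: L) (upd s s0 b) i z = pinz L s i z.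
Proof.
move=> ni; apply: eq_forallb => j; rewrite in_setU1 ffunE.
have ne : ((i, j) == s0) = false by rewrite xpair_eqE (negbTE ni).
by rewrite ne.
Qed.

Definition p0 (L : {set Y}) (s : ycfg) := [exists j, ((i0, j) \in L) && s (i0, j)].

Lemma site_TF (L : {set Y}) (s : ycfg) : s0 \notin L -> HH (s0 |: L) (upd s s0 true) i0 false = 0.
Proof. by move=> sL; rewrite /HH sum_kbbF pinz_site // ffunE. Qed.

Lemma site_FF (L : {set Y}) (s : ycfg) : s0 \notin L -> ~~ p0 L s -> HH (s0 |: L) (upd s s0 false) i0 false = 1.
Proof.
move=> sL np; rewrite /HH sum_kbbF pinz_site // ffunE /=.
have -> // : pinz L s i0 zf.
apply/forallP => j; apply/implyP => jL; rewrite ffunE.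
move/existsPn: np => /(_ j); rewrite jL /=.
by case: (s (i0, j)).
Qed.

Lemma site_TT (L : {set Y}) (s : ycfg) : s0 \notin L ->
  HH (s0 |: L) (upd s s0 true) i0 true = if p0 L s then 0 else k%:R^-1.
Proof.
move=> sL; rewrite /HH (eq_bigl (fun z : zcfg => (z j0 == true) && pinz L s i0 z)); last first.
  by move=> z; rewrite pinz_site.
case: ifP => p.
  apply: big1 => z /andP[zj0 pz]; rewrite /kbb; case: ifP => // /one_true [j' zE].
  case/existsP: p => j1 /andP[j1L sj1].
  have := forallP pz j1; rewrite j1L /= sj1 => /eqP zj1.
  move: zj0 zj1; rewrite zE !ffunE => /eqP/eqP e1 /eqP e2.
  by move: sL; rewrite e1 -e2 j1L.
pose ej : zcfg := [ffun j => j == j0].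
have pej : (ej j0 == true) && pinz L s i0 ej.
  rewrite ffunE eqxx /=; apply/forallP => j; apply/implyP => jL; rewrite ffunE.
  have ne : j != j0 by apply: contraNneq sL => <-.
  move/negbT/existsPn: p => /(_ j); rewrite jL /= (negbTE ne).
  by case: (s (i0, j)).
rewrite (bigD1 ej) //= big1 ?addr0.
  have -> : [set j | ej j] = [set j0] by apply/setP => j; rewrite !inE ffunE.
  by rewrite /kbb cards1.
move=> z /andP[/andP[zj0 pz] zne]; rewrite /kbb; case: ifP => // /one_true [j' zE].
move: zj0; rewrite zE ffunE => /eqP/eqP e1.
by move: zne; rewrite zE -e1 eqxx.
Qed.

End YW.

Section YW2.
Variables (R : realFieldType) (n k : nat).
Hypothesis k1 : (1 <= k)%N.
Notation Y := ('I_n * 'I_k)%type.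
Notation ycfg := {ffun Y -> bool}.
Notation xcfg := {ffun 'I_n -> bool}.
Variables (zeta : R) (mu : xcfg -> R).
Hypothesis mu0 : forall x, 0 <= mu x.
Hypothesis zeta0 : 0 < zeta.
Hypothesis cms : completely_marginally_stable zeta mu.
Variables (i0 : 'I_n) (j0 : 'I_k).
Notation s0 := (i0, j0).

Lemma split_h (h : bool -> R) (G : xcfg -> R) :
  \sum_(x : xcfg) mu x * (h (x i0) * G x) =
  h true * \sum_(x : xcfg | x i0 == true) mu x * G x +
  h false * \sum_(x : xcfg | x i0 == false) mu x * G x.
Proof.
rewrite (bigID (fun x : xcfg => x i0 == true)) /= !mulr_sumr; congr (_ + _).
  by apply: eq_bigr => x /eqP ->; rewrite mulrCA.
rewrite (eq_bigl (fun x : xcfg => x i0 == false)); last by move=> x; case: (x i0).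
by apply: eq_bigr => x /eqP ->; rewrite mulrCA.
Qed.

Lemma Rd_ge0 y : 0 <= Rd mu k y.
Proof.
apply: sumr_ge0 => x _; apply: mulr_ge0 => //; apply: prodr_ge0 => i _.
rewrite /kernel_block; case: (x i); case: ifP; rewrite ?invr_ge0 ?ler0n ?ler01 //.
Qed.

Lemma MY (L : {set Y}) (s : ycfg) b : s0 \notin L ->
  marg (Rd mu k) (s0 |: L) (upd s s0 b) =
  HH R (s0 |: L) (upd s s0 b) i0 true * BB mu i0 (HH R L s) true +
  HH R (s0 |: L) (upd s s0 b) i0 false * BB mu i0 (HH R L s) false.
Proof.
move=> sL; rewrite margY -split_h; apply: eq_bigr => x _; congr (_ * _).
rewrite (bigD1 i0) //=; congr (_ * _); apply: eq_bigr => i ni.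
by rewrite /HH (eq_bigl _ _ (fun z => @pinz_other n k i0 j0 L s b i z ni)).
Qed.

Lemma facts (L : {set Y}) (s : ycfg) : s0 \notin L ->
  marg (Rd mu k) (s0 |: L) (upd s s0 true) <=
  zeta * marg (Rd mu k) (s0 |: L) (upd s s0 false).
Proof.
move=> sL; rewrite !MY // site_TF // site_TT //.
have MF0 : 0 <= marg (Rd mu k) (s0 |: L) (upd s s0 false) by apply: marg_ge0; exact: Rd_ge0.
rewrite MY // in MF0.
case: ifP => p.
  by rewrite !mul0r addr0; apply: mulr_ge0 => //; apply: ltW.
rewrite site_FF ?p //.
have At := BB_ge0 mu0 i0 (fun j c => HH_ge0 R L s j c) true.
have Af := BB_ge0 mu0 i0 (fun j c => HH_ge0 R L s j c) false.
have h0 := HH_ge0 R (s0 |: L) (upd s s0 false) i0 true.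
have sA := sumA mu0 zeta0 cms i0 (fun j c => HH_ge0 R L s j c) (HH_adm R k1 L s).
have kp : (0 < k%:R :> R) by rewrite ltr0n.
have q0 : 0 <= k%:R^-1 :> R by rewrite invr_ge0 ltW.
have q1 : k%:R^-1 <= 1 :> R by rewrite invf_le1 // ler1n.
move: At Af h0 sA q0 q1.
set a := BB _ _ _ true; set b := BB _ _ _ false; set h := HH _ _ _ _ _; set q := k%:R^-1.
move=> At Af h0 sA q0 q1.
rewrite mul0r addr0 mul1r.
have : q * a <= a by nra.
have : 0 <= zeta * (h * a) by apply: mulr_ge0; [apply: ltW | apply: mulr_ge0].
nra.
Qed.

End YW2.

Lemma cross2 (R : realFieldType) (a b c d z : R) : 0 < b -> 0 < d -> a * d <= z * c * b -> a / b <= z * (c / d).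
Proof.
move=> b0 d0 H; rewrite ler_pdivrMr //.
have -> : z * (c / d) * b = (z * c * b) / d by rewrite mulrA mulrAC.
by rewrite ler_pdivlMr.
Qed.

Section YW3.
Variables (R : realFieldType) (n k : nat).
Hypothesis k1 : (1 <= k)%N.
Notation Y := ('I_n * 'I_k)%type.
Notation ycfg := {ffun Y -> bool}.
Notation xcfg := {ffun 'I_n -> bool}.
Variables (zeta : R) (mu : xcfg -> R).
Hypothesis mu0 : forall x, 0 <= mu x.
Hypothesis zeta0 : 0 < zeta.
Hypothesis cms : completely_marginally_stable zeta mu.
Variables (i0 : 'I_n) (j0 : 'I_k).
Notation s0 := (i0, j0).
Notation MM L s b := (marg (Rd mu k) (s0 |: L) (upd s s0 b)).

Lemma posY (L : {set Y}) (s : ycfg) : s0 \notin L -> 0 < marg (Rd mu k) L s ->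
  0 < MM L s false /\ Defs.ratio (Rd mu k) L s s0 = ((MM L s true / MM L s false)%:E)%E
  /\ MM L s true <= zeta * MM L s false /\ 0 <= MM L s true.
Proof.
move=> sL Z.
have sp := marg_split (Rd mu k) s sL.
have fa := facts k1 mu0 zeta0 cms s sL.
have T0 : 0 <= MM L s true by apply: marg_ge0; exact: Rd_ge0.
have F0 : 0 <= MM L s false by apply: marg_ge0; exact: Rd_ge0.
have Fp : 0 < MM L s false.
  rewrite lt_def F0 andbT; apply/eqP => F00.
  rewrite F00 mulr0 in fa.
  have T00 : MM L s true = 0 by apply/eqP; rewrite eq_le fa T0.
  by move: Z; rewrite sp T00 F00 addr0 ltxx.
split => //; split => //.
by rewrite ratioE ?gt_eqF //.
Qed.

Lemma mainY (S L : {set Y}) (s : ycfg) : S \subset L -> s0 \notin L ->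
  in_supp (Rd mu k) L s ->
  (Defs.ratio (Rd mu k) L s s0 <= (2 * zeta)%:E)%E /\
  (Defs.ratio (Rd mu k) L s s0 <= (2 * zeta)%:E * Defs.ratio (Rd mu k) S s s0)%E.
Proof.
move=> SL sL supp.
have sS : s0 \notin S by apply: contra sL; apply: (subsetP SL).
have ZS : 0 < marg (Rd mu k) S s.
  by apply: lt_le_trans supp _; apply: marg_mono => //; exact: Rd_ge0.
have [TL' [FL' [eTL [eFL [FL [rL [fL TL]]]]]]] : exists T F : R,
    T = MM L s true /\ F = MM L s false /\ 0 < F /\
    Defs.ratio (Rd mu k) L s s0 = ((T / F)%:E)%E /\ T <= zeta * F /\ 0 <= T.
  by exists (MM L s true), (MM L s false); split => //; split => //; exact: posY.
have [TS' [FS' [eTS [eFS [FS [rS [fS TS]]]]]]] : exists T F : R,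
    T = MM S s true /\ F = MM S s false /\ 0 < F /\
    Defs.ratio (Rd mu k) S s s0 = ((T / F)%:E)%E /\ T <= zeta * F /\ 0 <= T.
  by exists (MM S s true), (MM S s false); split => //; split => //; exact: posY.
rewrite rL rS; clear rL rS; split.
  rewrite lee_fin ler_pdivrMr //.
  have z2 : zeta <= 2 * zeta.
    by rewrite -[X in X <= _](mul1r zeta) ler_wpM2r ?ler1n // ltW.
  by apply: le_trans fL _; apply: ler_wpM2r => //; apply: ltW.
rewrite -EFinM lee_fin.
case: (boolP (p0 i0 L s)) => p.
  have -> : TL' = 0.
    by rewrite eTL MY // site_TF // site_TT // p !mul0r addr0.
  rewrite mul0r; apply: mulr_ge0; first by apply: mulr_ge0 => //; apply: ltW.
  by apply: divr_ge0 => //; apply: ltW.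
have pS : ~~ p0 i0 S s.
  apply: contra p => /existsP [j /andP[jS sj]]; apply/existsP; exists j.
  by rewrite (subsetP SL _ jS).
apply: cross2 => //.
rewrite MY // site_TF // site_TT // (negbTE p) in eTL.
rewrite MY // site_FF // in eFL.
rewrite MY // site_TF // site_TT // (negbTE pS) in eTS.
rewrite MY // site_FF // in eFS.
rewrite eTL eFL eTS eFS.
have At := BB_ge0 mu0 i0 (fun j c => HH_ge0 R L s j c) true.
have Af := BB_ge0 mu0 i0 (fun j c => HH_ge0 R L s j c) false.
have Bt := BB_ge0 mu0 i0 (fun j c => HH_ge0 R S s j c) true.
have Bf := BB_ge0 mu0 i0 (fun j c => HH_ge0 R S s j c) false.
have hL := HH_ge0 R (s0 |: L) (upd s s0 false) i0 true.
have hS := sum_kbbT_le1 R k1 (pinz (s0 |: S) (upd s s0 false) i0).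
have sA := sumA mu0 zeta0 cms i0 (fun j c => HH_ge0 R L s j c) (HH_adm R k1 L s).
have sB := sumB mu0 zeta0 cms (fun j c => HH_ge0 R S s j c) (HH_adm R k1 S s)
   (fun j c => HH_ge0 R L s j c) (i := i0).
have sB' : BB mu i0 (HH R L s) true * BB mu i0 (HH R S s) false <=
           zeta * BB mu i0 (HH R S s) true * BB mu i0 (HH R L s) false.
  apply: sB => x h; apply: lt_le_trans h _; apply: ler_prod => j _.
  by rewrite HH_ge0 HH_mono.
have kp : (0 < k%:R :> R) by rewrite ltr0n.
have q0 : 0 <= k%:R^-1 :> R by rewrite invr_ge0 ltW.
rewrite -/(HH R (s0 |: S) (upd s s0 false) i0 true) in hS.
move: At Af Bt Bf hL hS sA sB' q0.
set a := BB _ _ (HH R L s) true; set b := BB _ _ (HH R L s) false.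
set c := BB _ _ (HH R S s) true; set d := BB _ _ (HH R S s) false.
set hl := HH R (s0 |: L) _ _ _; set hs := HH R (s0 |: S) _ _ _; set q := k%:R^-1.
clear sB; move=> At Af Bt Bf hL hS sA sB q0.
rewrite !mul0r !addr0 !mul1r.
have ac0 : 0 <= a * c by apply: mulr_ge0.
have e1 : a * (hs * c) <= a * c.
  by rewrite mulrCA -[X in _ <= X]mul1r ler_wpM2r.
have e2 : a * c <= zeta * b * c by apply: ler_wpM2r.
have e3 : 0 <= zeta * c * (hl * a).
  by apply: mulr_ge0; [apply: mulr_ge0 => //; apply: ltW | apply: mulr_ge0].
have e4 : a * (hs * c + d) <= 2 * zeta * c * (hl * a + b).
  have e5 : a * (hs * c + d) = a * (hs * c) + a * d by ring.
  have e6 : 2 * zeta * c * (hl * a + b) = 2 * (zeta * c * (hl * a)) + 2 * (zeta * b * c) by ring.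
  have e7 : zeta * c * b = zeta * b * c by ring.
  rewrite e5 e6; apply: le_trans (lerD (le_trans e1 e2) sB) _.
  rewrite e7; move: e3; set X := zeta * b * c; set Z := zeta * c * (hl * a).
  move=> e3; lra.
have := ler_wpM2l q0 e4.
have f1 : q * a * (hs * c + d) = q * (a * (hs * c + d)) by ring.
have f2 : 2 * zeta * (q * c) * (hl * a + b) = q * (2 * zeta * c * (hl * a + b)) by ring.
by rewrite f1 f2.
Qed.

End YW3.

Unset Implicit Arguments.
Set Strict Implicit.

Theorem lemma6p3 (R : realFieldType) (n : nat) (zeta : R)
  (mu : {ffun 'I_n -> bool} -> R) :
  1 < zeta ->
  is_distribution mu ->
  completely_marginally_stable zeta mu ->
  forall k : nat, (1 <= k)%N ->
    marginally_stable (2 * zeta) (Rd mu k).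
Proof.
move=> z1 [mu0 _] cms k k1 s S L sigma SL sL supp.
have z0 : 0 < zeta by apply: lt_trans z1.
case: s sL supp => i0 j0 sL supp.
exact: mainY.
Qed.
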